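(* Let $m,n,s,k$ be integers such that $2\leqslant s\leqslant n$, $2\leqslant k\leqslant m$ and $ms=nk$. Let $c\geqslant 1$ and let $\Gamma$ be an abelian group of order $nkc$. Then there exists an $\mathrm{MRS}_\Gamma(m,n;s,k;c)$ in each of the following cases: (1) $s\equiv k\equiv 0\pmod 4$; (2) $s\equiv 2\pmod 4$ and $k\equiv 0\pmod 4$; (3) $s\equiv 0\pmod 4$ and $k\equiv 2\pmod 4$; (4) $s\equiv k\equiv 2\pmod 4$ and $m\equiv n\equiv 0\pmod 2$.
   Context: For positive integers $m,n,s,k,c$ and an abelian group $\Gamma$ of order $nkc$, an $\mathrm{MRS}_\Gamma(m,n;s,k;c)$ is a set of $c$ partially filled $m\times n$ arrays (some cells may be empty) with entries in $\Gamma$ such that: every element of $\Gamma$ appears exactly once and in a unique array; in every array each row contains exactly $s$ filled cells and each column contains exactly $k$ filled cells; and there exist $\omega,\delta\in\Gamma$ such that in every array each row sum is $\omega$ and each column sum is $\delta$. *)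

(* Defs.v *)
From mathcomp Require Import all_boot all_order all_algebra.
Set Implicit Arguments. Unset Strict Implicit. Unset Printing Implicit Defensive.
Import GRing.Theory.
Local Open Scope ring_scope.

(* A family of c partially filled m x n arrays with entries in the finite
   abelian (additive) group G: A a i j = None means the cell (i,j) of
   array a is empty, A a i j = Some g means it contains g. *)
Definition arrays (G : finZmodType) (m n c : nat) : Type :=
  'I_c -> 'I_m -> 'I_n -> option G.

(* A is an MRS_G(m,n;s,k;c) (the condition #|G| = n k c is a separate
   hypothesis of the theorem). *)
Definition is_MRS (G : finZmodType) (m n s k c : nat) (A : arrays G m n c) : Prop :=
  (forall g : G,
      #|[set t : 'I_c * 'I_m * 'I_n | A t.1.1 t.1.2 t.2 == Some g]| = 1%N) /\
  (forall (a : 'I_c) (i : 'I_m), #|[set j : 'I_n | A a i j != None]| = s) /\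
  (forall (a : 'I_c) (j : 'I_n), #|[set i : 'I_m | A a i j != None]| = k) /\
  (exists omega delta : G,
      (forall (a : 'I_c) (i : 'I_m), \sum_(j : 'I_n) odflt 0 (A a i j) = omega) /\
      (forall (a : 'I_c) (j : 'I_n), \sum_(i : 'I_m) odflt 0 (A a i j) = delta)).

(* Main.v *)
Require Import Defs.
From mathcomp Require Import all_boot all_order all_algebra zify ring.
Set Implicit Arguments. Unset Strict Implicit. Unset Printing Implicit Defensive.
Import GRing.Theory.


Lemma parity_inv (T : finType) (f : T -> T) (A : {set T}) :
  involutive f -> (forall x, x \in A -> f x \in A) ->
  odd #|A| = odd #|[set x in A | f x == x]|.
Proof.
move=> finv.
move: {2}#|A| (leqnn #|A|) => N; elim: N A => [|N IH] A hA fA.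
  move: hA; rewrite leqn0 => /eqP/cards0_eq ->.
  by rewrite cards0 (_ : [set x in set0 | _] = set0) ?cards0 //; apply/setP=> y; rewrite !inE.
case: (set_0Vmem A) => [->|[x xA]].
  by rewrite cards0 (_ : [set x in set0 | _] = set0) ?cards0 //; apply/setP=> y; rewrite !inE.
have [fx|nfx] := eqVneq (f x) x.
- have hA' : #|A :\ x| <= N by move: hA; rewrite (cardsD1 x A) xA.
  have fA' : forall y, y \in A :\ x -> f y \in A :\ x.
    move=> y; rewrite !inE => /andP[yx yA]; rewrite fA // andbT.
    by apply: contraNneq yx => fyx; rewrite -(finv y) fyx fx.
  rewrite (cardsD1 x A) xA (cardsD1 x [set x in A | f x == x]) inE xA fx eqxx /=.
  rewrite IH //; congr (~~ odd _); apply: eq_card => y; rewrite !inE.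
  by case: (y == x).
- set A' := A :\ x :\ f x.
  have fxA : f x \in A by apply: fA.
  have hcard : #|A| = (#|A'| + 2)%N.
    rewrite /A' (cardsD1 x A) xA (cardsD1 (f x) (A :\ x)) !inE fxA nfx /=. lia.
  have fA' : forall y, y \in A' -> f y \in A'.
    move=> y; rewrite !inE => /andP[yfx /andP[yx yA]]; rewrite fA // andbT.
    apply/andP; split.
      by apply: contraNneq yx => fyx; rewrite -(finv y) fyx finv.
    by apply: contraNneq yfx => fyx; rewrite -(finv y) fyx.
  rewrite hcard oddD /= addbF (IH A') //; last by move: hA; rewrite hcard; lia.
  congr odd; apply: eq_card => y; rewrite !inE.
  have [->|yfx] /= := eqVneq y (f x); first by rewrite finv eq_sym (negbTE nfx) andbF.
  by have [->|yx] //= := eqVneq y x; rewrite (negbTE nfx) andbF.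
Qed.

Section Grp.
Variable G : finZmodType.
Local Open Scope ring_scope.

Lemma dd_opp (d : G) : d + d = 0 -> - d = d.
Proof. by move=> h; apply/eqP; rewrite eq_sym -subr_eq0 opprK h. Qed.

Lemma exists_inv2 : ~~ odd #|G| -> exists d : G, d != 0 /\ d + d = 0.
Proof.
move=> ev.
have := parity_inv (f:=fun x : G => - x) (A:=[set: G]) (@opprK G) (fun x _ => in_setT _).
rewrite cardsT (negbTE ev) => /esym h.
set S := [set x in [set: G] | - x == x] in h.
have S0 : (0:G) \in S by rewrite !inE oppr0 eqxx.
have : (0 < #|S :\ (0%R:G)|)%N by move: h; rewrite (cardsD1 0 S) S0; case: #|S :\ (0%R:G)|.
case/card_gt0P => d; rewrite !inE => /andP[dn0 /eqP nd].
by exists d; split => //; rewrite -{1}nd addNr.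
Qed.

Lemma exists_sigma : (4 %| #|G|)%N ->
  exists sigma d : G, d != 0 /\ d + d = 0 /\
    forall y : G, y + y != sigma /\ y + y != sigma + d.
Proof.
move=> h4.
have ev : ~~ odd #|G| by move: h4 => /dvdnP[q ->]; rewrite oddM andbF.
have [d0 [d0n0 d0d]] := exists_inv2 ev.
set U := [set y + y | y in [set: G]].
have Ult : (#|U| < #|G|)%N.
  rewrite ltn_neqAle max_card andbT -cardsT.
  apply/negP => /imset_injP inj.
  move: (inj d0 0 (in_setT _) (in_setT _)); rewrite d0d addr0 => /(_ erefl) => e.
  by rewrite e eqxx in d0n0.
have pickout : forall V : {set G}, (#|V| < #|G|)%N -> exists x, x \notin V.
  move=> V hV; have : ~~ ([set: G] \subset V).
    by apply/negP => /subset_leq_card; rewrite cardsT leqNgt hV.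
  by case/subsetPn => x _ xV; exists x.
have [/existsP [d /and3P [dU dn0 /eqP dd]] | noU] :=
   boolP [exists d in U, (d != 0) && (d + d == 0)].
  case/imsetP: dU => y0 _ dy0.
  have [sig sU] := pickout U Ult.
  exists sig, d; split => //; split => // y; split.
    by apply: contraNneq sU => <-; apply: imset_f; rewrite inE.
  apply: contraNneq sU => e; apply/imsetP; exists (y + y0); first by rewrite inE.
  have -> : sig = (sig + d) + d by rewrite -addrA dd addr0.
  by rewrite -e dy0; rewrite addrACA.
have Uz : forall z, z \in U -> z + z = 0 -> z = 0.
  move=> z zU zz; apply/eqP; apply: contraR noU => zn0.
  by apply/existsP; exists z; rewrite zU zn0 zz eqxx.
have Uodd : odd #|U|.
  have clo : forall x, x \in U -> - x \in U.
    move=> x /imsetP [y _ ->]; rewrite opprD; exact: imset_f (in_setT _).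
  rewrite (parity_inv (@opprK G) clo).
  rewrite (_ : [set x in U | - x == x] = [set 0]) ?cards1 //.
  apply/setP => z; rewrite !inE; apply/idP/idP.
    case/andP => zU /eqP nz; apply/eqP; apply: Uz => //; by rewrite -{1}nz addNr.
  move/eqP => ->; rewrite oppr0 eqxx andbT.
  by apply/imsetP; exists 0; rewrite ?inE ?addr0.
pose g z := odflt 0 [pick y : G | y + y == z].
have gP : forall z, z \in U -> g z + g z = z.
  move=> z /imsetP [y _ ->]; rewrite /g; case: pickP => [y' /eqP //|/(_ y)].
  by rewrite eqxx.
set W := g @: U.
set W' := [set w + d0 | w in W].
have cW : #|W| = #|U|.
  apply: card_in_imset => z z' zU z'U e; by rewrite -(gP z zU) -(gP z' z'U) e.
have cW' : #|W'| = #|W|.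
  by apply: card_imset => w w' /eqP; rewrite (can2_eq (addrK d0) (subrK d0)) addrK => /eqP.
have disj : W :&: W' = set0.
  apply/setP => w; rewrite !inE; apply/negP => /andP [/imsetP [z zU ->]].
  case/imsetP => w' /imsetP [z' z'U ->] e.
  have ezz : z = z'.
    by rewrite -(gP z zU) -(gP z' z'U) e addrACA d0d addr0.
  move: e; rewrite ezz => /eqP; rewrite -subr_eq0 opprD addrA subrr add0r oppr_eq0.
  by rewrite (negbTE d0n0).
have le2 : (#|U| + #|U| <= #|G|)%N.
  have := max_card (W :|: W'); rewrite cardsU disj cards0 subn0 cW' cW; done.
have lt2 : (#|U| + #|U| < #|G|)%N.
  rewrite ltn_neqAle le2 andbT; apply/negP => /eqP e.
  move: h4; rewrite -e => /dvdnP [q hq]; move: Uodd; have -> : #|U| = (q*2)%N by lia.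
  by rewrite oddM andbF.
set V := U :|: [set z + d0 | z in U].
have Vlt : (#|V| < #|G|)%N.
  apply: leq_ltn_trans lt2; rewrite cardsU.
  have -> : #|[set z + d0 | z in U]| = #|U|.
    by apply: card_imset => w w' /eqP; rewrite (can2_eq (addrK d0) (subrK d0)) addrK => /eqP.
  lia.
have [sig sV] := pickout V Vlt.
exists sig, d0; split => //; split => // y; split.
  apply: contraNneq sV => <-; rewrite inE; apply/orP; left; exact: imset_f (in_setT _).
apply: contraNneq sV => e; rewrite inE; apply/orP; right.
apply/imsetP; exists (y + y); first exact: imset_f (in_setT _).
by rewrite e -addrA d0d addr0.
Qed.
End Grp.

Section Reps.
Variable G : finZmodType.
Local Open Scope ring_scope.
Variables (sigma d : G).
Hypothesis dn0 : d != 0.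
Hypothesis dd : d + d = 0.
Hypothesis hsig : forall y : G, y + y != sigma /\ y + y != sigma + d.

Definition fa (a : bool) (y : G) := if a then sigma - y else y.
Definition tb (b : bool) : G := if b then d else 0.
Definition bb (y : G) (a b : bool) := fa a y + tb b.

Lemma tb_opp b : - tb b = tb b.
Proof. by case: b => /=; rewrite ?oppr0 ?dd_opp. Qed.

Lemma fa_add a z b : fa a (z + tb b) = fa a z + tb b.
Proof. by case: a => //=; rewrite opprD tb_opp addrA. Qed.

Lemma fa_fa a0 a y : fa a (fa a0 y) = fa (a0 (+) a) y.
Proof. by case: a0; case: a => //=; rewrite opprB addrC subrK. Qed.

Lemma tb_tb b0 b : tb b0 + tb b = tb (b0 (+) b).
Proof. by case: b0; case: b => //=; rewrite ?addr0 ?add0r. Qed.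

Lemma bb_bb y a0 b0 a b : bb (bb y a0 b0) a b = bb y (a0 (+) a) (b0 (+) b).
Proof. by rewrite /bb fa_add fa_fa -addrA tb_tb. Qed.

Lemma bb0 y : bb y false false = y.
Proof. by rewrite /bb /= addr0. Qed.

Lemma bb_inv y a b : bb (bb y a b) a b = y.
Proof. by rewrite bb_bb !addbb bb0. Qed.

Lemma bb_inj y a b a' b' : bb y a b = bb y a' b' -> a = a' /\ b = b'.
Proof.
have tbinj : forall b b', tb b = tb b' -> b = b'.
  by case; case => //= /eqP; rewrite ?(negbTE dn0) // eq_sym (negbTE dn0).
move=> e; have [ea|aa'] := eqVneq a a'.
  by move: e; rewrite /bb ea => /addrI /tbinj; split.
exfalso.
have E : bb y (a (+) a') (b (+) b') = y by rewrite -bb_bb e bb_inv.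
move: E; rewrite /bb; have -> : a (+) a' = true by move: aa'; clear; case: a; case: a'.
rewrite /= => E.
have : y + y = sigma + tb (b (+) b') by rewrite -{1}E addrAC subrK.
case: (b (+) b') => /= ; rewrite ?addr0 => /eqP; by case: (hsig y) => h1 h2; rewrite ?(negbTE h1) ?(negbTE h2).
Qed.

Definition Rep := [set y : G | [forall ab : bool * bool,
   (enum_rank y <= enum_rank (bb y ab.1 ab.2))%N]].

Lemma Rep_uniq y y' a b a' b' : y \in Rep -> y' \in Rep ->
  bb y a b = bb y' a' b' -> y = y'.
Proof.
rewrite !inE => /forallP hy /forallP hy' e.
have e1 : y' = bb y (a (+) a') (b (+) b') by rewrite -bb_bb e bb_inv.
have e2 : y = bb y' (a' (+) a) (b' (+) b) by rewrite -bb_bb -e bb_inv.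
apply: enum_rank_inj; apply: val_inj; apply/eqP; rewrite eqn_leq.
by move: (hy (a (+) a', b (+) b')) (hy' (a' (+) a, b' (+) b)) => /=; rewrite -e1 -e2 => -> ->.
Qed.

Lemma Rep_surj g : exists y a b, y \in Rep /\ g = bb y a b.
Proof.
pose ab0 := [arg min_(ab < (false, false)) (enum_rank (bb g ab.1 ab.2) : nat)].
case: (@arg_minnP _ (false,false) xpredT (fun ab => (enum_rank (bb g ab.1 ab.2) : nat)) erefl) => [[a0 b0] _ hmin].
exists (bb g a0 b0), a0, b0; split; last by rewrite bb_inv.
rewrite inE; apply/forallP => [[a b]] /=; rewrite bb_bb.
exact: (hmin (a0 (+) a, b0 (+) b)).
Qed.

Lemma reps Q : (4 * Q)%N = #|G| -> exists x : nat -> G, forall q q' a a' b b',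
  (q < Q)%N -> (q' < Q)%N -> bb (x q) a b = bb (x q') a' b' -> [/\ q = q', a = a' & b = b'].
Proof.
move=> hQ.
pose F := fun p : G * (bool * bool) => bb p.1 p.2.1 p.2.2.
pose D := setX Rep [set: bool * bool].
have injF : {in D &, injective F}.
  move=> [y [a b]] [y' [a' b']]; rewrite !in_setX !in_setT /F /= !andbT => yR y'R e.
  have ey := Rep_uniq yR y'R e; move: e; rewrite ey => /bb_inj [-> ->]; done.
have surjF : F @: D = [set: G].
  apply/setP => g; rewrite inE; have [y [a [b [yR ->]]]] := Rep_surj g.
  by apply/imsetP; exists (y, (a, b)); rewrite // in_setX in_setT yR.
have cR : #|Rep| = Q.
  have := card_in_imset injF; rewrite surjF cardsT /D cardsX cardsT card_prod.
  rewrite !card_bool -hQ; lia.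
exists (fun q => nth 0 (enum Rep) q) => q q' a a' b b' hq hq' e.
have sz : size (enum Rep) = Q by rewrite -cardE.
have xR : forall i, (i < Q)%N -> nth 0 (enum Rep) i \in Rep.
  by move=> i hi; rewrite -mem_enum mem_nth // sz.
have ey := Rep_uniq (xR _ hq) (xR _ hq') e.
move: e; rewrite ey => /bb_inj [ea eb]; split => //.
by apply/eqP; rewrite -(nth_uniq 0 _ _ (enum_uniq (mem Rep))) ?sz // ey.
Qed.
End Reps.

Lemma regroup (G : zmodType) (F : nat -> G) a b :
  (\sum_(0 <= l < a * b) F l = \sum_(0 <= i < a) \sum_(0 <= j < b) F (i * b + j)%N)%R.
Proof.
rewrite big_nat_mul; apply: eq_bigr => i _.
rewrite -{1}[i * b]add0n big_addn.
have -> : i.+1 * b - i * b = b by rewrite mulSn addnK.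
by apply: eq_bigr => j _; rewrite addnC.
Qed.

Lemma sum_support (G : zmodType) (T : finType) (S : {set T}) (F : T -> G) :
  (forall j, j \notin S -> F j = 0%R) -> (\sum_j F j = \sum_(j in S) F j)%R.
Proof.
move=> h; rewrite [RHS]big_mkcond /=; apply: eq_bigr => j _.
by case: ifP => // /negbT /h.
Qed.

Section Constr.
Variables (G : finZmodType) (sigma d : G) (x : nat -> G).
Variables (m n s k c p r M s' : nat).
Hypothesis dd : (d + d = 0)%R.
Hypothesis hx : forall q q' a a' b b', q < c * (p * M) -> q' < c * (p * M) ->
  bb sigma d (x q) a b = bb sigma d (x q') a' b' -> [/\ q = q', a = a' & b = b'].
Hypothesis hs : s = s' * 2.
Hypothesis s'0 : 0 < s'.
Hypothesis hsn : s <= n.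
Hypothesis hms : m * s = n * k.
Hypothesis hp : p * 2 = n * r.
Hypothesis r0 : 0 < r.
Hypothesis hk : k = M * (r * 2).
Hypothesis M0 : 0 < M.
Hypothesis hG : #|G| = n * k * c.

Lemma s0 : 0 < s. Proof. lia. Qed.
Lemma n0 : 0 < n. Proof. lia. Qed.
Lemma p0 : 0 < p. Proof. have := n0; nia. Qed.
Lemma msQ : m * s = 4 * (p * M).
Proof. rewrite hms hk. have -> : n * (M * (r * 2)) = M * 2 * (n * r) by ring. rewrite -hp; ring. Qed.

Definition E e := e %/ 2.
Definition uu e := odd (E e %/ p).
Definition vv e := odd e.
Definition rho e := E e %% p + p * (E e %/ p %/ 2).
Definition qq a e := a * (p * M) + rho e.
Definition Vv a e := bb sigma d (x (qq a e)) (uu e (+) vv e) (vv e).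

Lemma rho_lt e : e < m * s -> rho e < p * M.
Proof.
rewrite msQ => he.
have h1 : E e %% p < p by rewrite ltn_pmod // p0.
have h2 : E e %/ p < M * 2 by rewrite ltn_divLR ?p0 //; rewrite /E; lia.
have h3 : E e %/ p %/ 2 < M by rewrite ltn_divLR //.
rewrite /rho; nia.
Qed.

Lemma half_eq y : y = 2 * (y %/ 2) + odd y.
Proof. rewrite -modn2; lia. Qed.

Lemma rho_div e : rho e %/ p = E e %/ p %/ 2.
Proof. by rewrite /rho addnC mulnC divnMDl ?p0 // (divn_small (ltn_pmod _ p0)) addn0. Qed.

Lemma rho_mod e : rho e %% p = E e %% p.
Proof. by rewrite /rho addnC mulnC modnMDl modn_small // ltn_pmod // p0. Qed.

Lemma decomp e : e = 2 * (p * (2 * (rho e %/ p) + uu e) + rho e %% p) + vv e.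
Proof.
rewrite rho_div rho_mod /uu /vv.
rewrite {1}(half_eq e) -/(E e) {1}(divn_eq (E e) p) {1}(half_eq (E e %/ p)).
ring.
Qed.

Lemma V_inj a a' e e' : a < c -> a' < c -> e < m * s -> e' < m * s ->
  Vv a e = Vv a' e' -> a = a' /\ e = e'.
Proof.
move=> ha ha' he he' eV.
have hq : forall a e, a < c -> e < m * s -> qq a e < c * (p * M).
  move=> a1 e1 h1 h2; have := rho_lt h2; rewrite /qq; nia.
have [eq eu ev] := hx (hq _ _ ha he) (hq _ _ ha' he') eV.
have eu' : uu e = uu e' by move: eu; rewrite ev => /addIb.
have Q0 : 0 < p * M by rewrite muln_gt0 p0.
have ea : a = a'.
  have := congr1 (fun z => z %/ (p * M)) eq; rewrite /qq /=.
  by rewrite !divnMDl // !divn_small ?addn0 // rho_lt.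
split => //.
have er : rho e = rho e' by move: eq; rewrite /qq ea => /addnI.
by rewrite (decomp e) (decomp e') er eu' ev.
Qed.

Lemma row_lt (e : 'I_(m * s)) : e %/ s < m.
Proof. by rewrite ltn_divLR ?s0. Qed.
Definition rowo (e : 'I_(m * s)) : 'I_m := Ordinal (row_lt e).
Definition colo (e : 'I_(m * s)) : 'I_n := Ordinal (ltn_pmod e n0).

Lemma BI e e' : rowo e = rowo e' -> colo e = colo e' -> e = e'.
Proof.
move=> /(congr1 val) /= h1 /(congr1 val) /= h2; apply: val_inj => /=.
wlog le : e e' h1 h2 / e <= e'.
  move=> W; case: (leqP e e') => h; first exact: W.
  by apply/esym/W => //; apply: ltnW.
have hs0 := s0.
have a1 : e %/ s * s <= e by rewrite leq_trunc_div.
have a2 : e' < e' %/ s * s + s by rewrite {1}(divn_eq e' s) ltn_add2l ltn_pmod.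
have hd : n %| e' - e by rewrite -eqn_mod_dvd // h2.
case: (posnP (e' - e)) => [|pos]; first lia.
have := dvdn_leq pos hd; lia.
Qed.

Definition Af (a : 'I_c) (i : 'I_m) (j : 'I_n) : option G :=
  if [pick e : 'I_(m * s) | (rowo e == i) && (colo e == j)] is Some e
  then Some (Vv a e) else None.

Lemma A_cell a e : Af a (rowo e) (colo e) = Some (Vv a e).
Proof.
rewrite /Af; case: pickP => [e' /andP[/eqP h1 /eqP h2]|/(_ e)]; last by rewrite !eqxx.
by rewrite (BI h1 h2).
Qed.

Lemma A_some a i j : Af a i j != None -> exists e, rowo e = i /\ colo e = j.
Proof.
rewrite /Af; case: pickP => // e /andP[/eqP h1 /eqP h2] _; by exists e.
Qed.

Lemma cellR_lt (i : 'I_m) (l : 'I_s) : i * s + l < m * s.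
Proof. have := ltn_ord i; have := ltn_ord l; nia. Qed.
Definition cellR i l : 'I_(m * s) := Ordinal (cellR_lt i l).

Lemma rowoR i l : rowo (cellR i l) = i.
Proof. apply: val_inj => /=; by rewrite divnMDl ?s0 // divn_small ?addn0. Qed.

Lemma rowoR_inv e : e = cellR (rowo e) (Ordinal (ltn_pmod e s0)).
Proof. by apply: val_inj => /=; rewrite -divn_eq. Qed.

Lemma cellC_lt (j : 'I_n) (t : 'I_k) : j + n * t < m * s.
Proof. rewrite hms; have := ltn_ord j; have := ltn_ord t; nia. Qed.
Definition cellC j t : 'I_(m * s) := Ordinal (cellC_lt j t).

Lemma coloC j t : colo (cellC j t) = j.
Proof. apply: val_inj => /=; by rewrite addnC mulnC modnMDl modn_small. Qed.

Lemma colo_div_lt (e : 'I_(m * s)) : e %/ n < k.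
Proof.
have h := ltn_ord e; move: (e : nat) h => e' h; rewrite hms in h.
by rewrite ltn_divLR ?n0 // mulnC.
Qed.

Lemma coloC_inv e : e = cellC (colo e) (Ordinal (colo_div_lt e)).
Proof. by apply: val_inj => /=; rewrite (addnC (_ %% n)) (mulnC n) -divn_eq. Qed.

Lemma row_set a i : [set j | Af a i j != None] = [set colo (cellR i l) | l : 'I_s].
Proof.
apply/setP => j; rewrite inE; apply/idP/imsetP.
  case/A_some => e [<- <-]; exists (Ordinal (ltn_pmod e s0)) => //.
  by rewrite {1}(rowoR_inv e).
by case=> l _ ->; rewrite -[X in Af a X _](rowoR i l) A_cell.
Qed.

Lemma col_set a j : [set i | Af a i j != None] = [set rowo (cellC j t) | t : 'I_k].
Proof.
apply/setP => i; rewrite inE; apply/idP/imsetP.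
  case/A_some => e [<- <-]; exists (Ordinal (colo_div_lt e)) => //.
  by rewrite {1}(coloC_inv e).
by case=> t _ ->; rewrite -[X in Af a _ X](coloC j t) A_cell.
Qed.

Lemma row_inj i : injective (fun l : 'I_s => colo (cellR i l)).
Proof.
move=> l l' h; have := BI (etrans (rowoR i l) (esym (rowoR i l'))) h.
by move/(congr1 val) => /= /addnI /val_inj.
Qed.

Lemma col_inj j : injective (fun t : 'I_k => rowo (cellC j t)).
Proof.
move=> t t' h; have := BI h (etrans (coloC j t) (esym (coloC j t'))).
move/(congr1 val) => /= /addnI /eqP; rewrite eqn_mul2l (negbTE (lt0n_neq0 n0)) /=.
by move/eqP/val_inj.
Qed.

Lemma row_card a i : #|[set j | Af a i j != None]| = s.
Proof. by rewrite row_set card_imset ?card_ord //; apply: row_inj. Qed.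

Lemma col_card a j : #|[set i | Af a i j != None]| = k.
Proof. by rewrite col_set card_imset ?card_ord //; apply: col_inj. Qed.


Lemma fa_pair a y : (fa sigma a y + fa sigma (~~ a) y = sigma)%R.
Proof. by case: a => /=; [rewrite subrK | rewrite addrC subrK]. Qed.

Lemma row_pair a f : (Vv a (f * 2) + Vv a (f * 2 + 1) = sigma + d)%R.
Proof.
have e1 : E (f * 2) = f by rewrite /E mulnK.
have e2 : E (f * 2 + 1) = f by rewrite /E; lia.
have v1 : vv (f * 2) = false by rewrite /vv oddM andbF.
have v2 : vv (f * 2 + 1) = true by rewrite /vv oddD oddM andbF.
rewrite /Vv v1 v2 /qq /rho /uu e1 e2 addbF addbT /bb /tb /=.
by rewrite addr0 addrA fa_pair.
Qed.

Lemma col_pair a e b w : E e = (2 * b) * p + w -> w < p ->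
  (Vv a e + Vv a (e + p * 2) = sigma)%R.
Proof.
move=> hE hw.
have hE' : E (e + p * 2) = (2 * b).+1 * p + w by move: hE; rewrite /E mulSn; lia.
have d1 : E e %/ p = 2 * b by rewrite hE divnMDl ?p0 // (divn_small hw) addn0.
have m1 : E e %% p = w by rewrite hE modnMDl (modn_small hw).
have d2 : E (e + p * 2) %/ p = (2 * b).+1 by rewrite hE' divnMDl ?p0 // (divn_small hw) addn0.
have m2 : E (e + p * 2) %% p = w by rewrite hE' modnMDl (modn_small hw).
have h1 : (2 * b) %/ 2 = b by rewrite mulKn.
have h2 : (2 * b).+1 %/ 2 = b by lia.
have u1 : uu e = false by rewrite /uu d1 oddM.
have u2 : uu (e + p * 2) = true by rewrite /uu d2 /= oddM.
have ev : vv (e + p * 2) = vv e by rewrite /vv oddD oddM /= andbF addbF.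
have er : rho (e + p * 2) = rho e by rewrite /rho d1 d2 m1 m2 h1 h2.
rewrite /Vv /qq er u1 u2 ev addFb addTb /bb.
by rewrite addrACA fa_pair (tb_tb dd) addbb /tb addr0.
Qed.

Lemma row_sum a i : (\sum_(j : 'I_n) odflt 0%R (Af a i j) = (sigma + d) *+ s')%R.
Proof.
rewrite (@sum_support _ _ [set colo (cellR i l) | l : 'I_s]); last first.
  by move=> j; rewrite -(row_set a) inE negbK => /eqP ->.
rewrite big_imset /=; last by move=> l l' _ _; apply: row_inj.
transitivity (\sum_(l < s) Vv a (i * s + l))%R.
  by apply: eq_bigr => l _; rewrite -[X in Af a X _](rowoR i l) A_cell.
rewrite -(big_mkord xpredT (fun l => Vv a (i * s + l))) hs regroup.
have -> : ((sigma + d) *+ s' = \sum_(0 <= b < s') (sigma + d))%R by rewrite sumr_const_nat subn0.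
apply: eq_bigr => b _.
rewrite big_nat_recr //= big_nat1.
have -> : i * (s' * 2) + (b * 2 + 0) = (i * s' + b) * 2 by ring.
have -> : i * (s' * 2) + (b * 2 + 1) = (i * s' + b) * 2 + 1 by ring.
exact: row_pair.
Qed.

Lemma col_sum a j : (\sum_(i : 'I_m) odflt 0%R (Af a i j) = (sigma *+ r) *+ M)%R.
Proof.
rewrite (@sum_support _ _ [set rowo (cellC j t) | t : 'I_k]); last first.
  by move=> i; rewrite -(col_set a) inE negbK => /eqP ->.
rewrite big_imset /=; last by move=> t t' _ _; apply: col_inj.
transitivity (\sum_(t < k) Vv a (j + n * t))%R.
  by apply: eq_bigr => t _; rewrite -[X in Af a _ X](coloC j t) A_cell.
rewrite -(big_mkord xpredT (fun t => Vv a (j + n * t))) hk regroup.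
have -> : ((sigma *+ r) *+ M = \sum_(0 <= b < M) (sigma *+ r))%R by rewrite sumr_const_nat subn0.
apply: eq_bigr => b _.
rewrite (@big_cat_nat _ _ _ r) //=; last by lia.
rewrite (big_addn 0 (r * 2) r).
have -> : r * 2 - r = r by lia.
have -> : (sigma *+ r = \sum_(0 <= c0 < r) sigma)%R by rewrite sumr_const_nat subn0.
rewrite -big_split /=.
apply: eq_big_nat => c0 /andP[_ hc].
have hj := ltn_ord j.
have e1 : n * (b * (r * 2) + (c0 + r)) = n * (b * (r * 2) + c0) + p * 2 by rewrite hp; ring.
rewrite e1 addnA.
have e2 : n * (b * (r * 2) + c0) = n * c0 + b * 2 * (p * 2) by rewrite hp; ring.
have lt1 : j + n * c0 < n * r by nia.
have hE : E (j + n * (b * (r * 2) + c0)) = 2 * b * p + (j + n * c0) %/ 2.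
  by rewrite /E e2; lia.
have hw : (j + n * c0) %/ 2 < p by lia.
exact: (col_pair a hE hw).
Qed.


Lemma mrs : @is_MRS G m n s k c Af.
Proof.
split.
  move=> g.
  pose Vf := fun t : 'I_c * 'I_(m * s) => Vv t.1 t.2.
  have Vinj : injective Vf.
    move=> [a e] [a' e'] /= h.
    have [h1 h2] := V_inj (ltn_ord a) (ltn_ord a') (ltn_ord e) (ltn_ord e') h.
    by congr pair; apply: val_inj.
  have : g \in codom Vf.
    apply: inj_card_onto => //; rewrite card_prod !card_ord hG -hms mulnC.
    done.
  case/codomP => [[a0 e0]] ->.
  rewrite (_ : [set t | _] = [set (a0, rowo e0, colo e0)]) ?cards1 //.
  apply/setP => [[[a i] j]]; rewrite !inE /=.
  apply/eqP/eqP.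
    move=> h; have : Af a i j != None by rewrite h.
    case/A_some => e [ei ej]; move: h; rewrite -ei -ej A_cell => [[]] h.
    by have [-> ->] : (a, e) = (a0, e0) by apply: Vinj.
  by case=> -> -> ->; rewrite A_cell.
split; first exact: row_card.
split; first exact: col_card.
exists ((sigma + d) *+ s')%R, ((sigma *+ r) *+ M)%R; split.
  exact: row_sum.
exact: col_sum.
Qed.

End Constr.

Theorem proposition5p15 (m n s k c : nat) (G : finZmodType) :
  (2 <= s <= n)%N -> (2 <= k <= m)%N -> (m * s = n * k)%N ->
  (1 <= c)%N -> #|G| = (n * k * c)%N ->
  [\/ (s %% 4 = 0 /\ k %% 4 = 0)%N,
      (s %% 4 = 2 /\ k %% 4 = 0)%N,
      (s %% 4 = 0 /\ k %% 4 = 2)%N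
    | (s %% 4 = 2 /\ k %% 4 = 2 /\ m %% 2 = 0 /\ n %% 2 = 0)%N] ->
  exists A : arrays G m n c, @is_MRS G m n s k c A.
Proof.
move=> /andP[s2 sn] /andP[k2 km] hms c1 hG hcase.
have [r [p [M [hp r0 hk M0]]]] : exists r p M,
    [/\ (p * 2 = n * r)%N, (0 < r)%N, k = (M * (r * 2))%N & (0 < M)%N].
  case: hcase => [[hs4 hk4]|[hs4 hk4]|[hs4 hk4]|[hs4 [hk4 [hm2 hn2]]]].
  - exists 2, n, (k %/ 4); split; [by rewrite mulnC | by [] | clear -hk4; lia | clear -hk4 k2; lia].
  - exists 2, n, (k %/ 4); split; [by rewrite mulnC | by [] | clear -hk4; lia | clear -hk4 k2; lia].
  - have hn2 : (n %% 2 = 0)%N by clear -hs4 hk4 hms; nia.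
    exists 1, (n %/ 2), (k %/ 2); split; [clear -hn2; lia | by [] | clear -hk4; lia | clear -hk4 k2; lia].
  - exists 1, (n %/ 2), (k %/ 2); split; [clear -hn2; lia | by [] | clear -hk4; lia | clear -hk4 k2; lia].
have hs : s = (s %/ 2 * 2)%N.
  by clear -hcase; case: hcase => [[h _]|[h _]|[h _]|[h _]]; lia.
have s'0 : (0 < s %/ 2)%N by clear -s2; lia.
have hQ : (4 * (c * (p * M)))%N = #|G|.
  rewrite hG hk; have -> : (n * (M * (r * 2)) = M * 2 * (n * r))%N by ring.
  rewrite -hp; ring.
have h4 : (4 %| #|G|)%N by rewrite -hQ dvdn_mulr.
have [sig [d [dn0 [dd hsig]]]] := exists_sigma h4.
have [x hx] := reps dn0 dd hsig hQ.
eexists; exact: (mrs dd hx hs s'0 sn hms hp r0 hk M0 hG).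
Qed.
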